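(* Let $T$, $\mathcal{J}=\langle N,B\rangle$, an allocation $(\mathcal{C}_s,\mathcal{B}_s)$, a node $v$ and a scenario $\sigma$ be as in the context. If $T_v$ can offer more than $N$ working VMs in scenario $\sigma$, then $T_v$ can offer exactly $N$ working VMs in scenario $\sigma$ (with the same bandwidth allocation $\mathcal{B}_s$).
   Context: $T=(V,L)$ is a rooted tree whose leaves form the set $H$ of physical machines (PMs) and whose internal nodes are switches; for a node $u$, $T_u$ is the subtree rooted at $u$ and $l_u$ is the link from $u$ to its parent. A request is $\mathcal{J}=\langle N,B\rangle$ with $N$ a positive integer and $B\ge0$. An allocation is a pair $(\mathcal{C}_s,\mathcal{B}_s)$ with $\mathcal{C}_s:H\to\mathbb{Z}_{\ge0}$ and $\mathcal{B}_s:L\to\mathbb{R}_{\ge0}$. A scenario is either ''no failure'' or the failure of a single PM $F\in H$. The subtree $T_v$ can offer $n$ working VMs in a scenario if there is an assignment $w:H\cap T_v\to\mathbb{Z}_{\ge0}$ with $w(h)\le\mathcal{C}_s(h)$ for all $h$, $w(F)=0$ if $F$ is the failed PM, $\sum_{h\in H\cap T_v}w(h)=n$, and for every node $u$ of $T_v$ (including $u=v$, whenever $l_u$ exists) $\min\{n_u,N-n_u\}\cdot B\le\mathcal{B}_s(l_u)$, where $n_u=\sum_{h\in H\cap T_u}w(h)$. *)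

(* Defs.v *)
From HB Require Import structures.
From mathcomp Require Import all_boot all_order all_algebra.
Set Implicit Arguments. Unset Strict Implicit. Unset Printing Implicit Defensive.
Import Order.TTheory GRing.Theory Num.Theory.
Local Open Scope ring_scope.

(* A rooted tree on the finite node set V is given by a parent map
   [par : V -> option V]; [par u = Some p] means the link l_u goes from u
   to its parent p; [par r = None] only for the root r. *)
Definition is_rooted_tree (V : finType) (par : V -> option V) : Prop :=
  exists r : V, par r = None /\
    forall x : V, exists k : nat, iter k (obind par) (Some x) = Some r.

(* [desc par u x] : x is a node of the subtree T_u (x = u or a descendant of u). *)
Definition desc (V : finType) (par : V -> option V) (u x : V) : bool :=
  connect (fun a b => par a == Some b) x u.

(* Leaves (= the PMs, set H): nodes with no child. *)
Definition is_leaf (V : finType) (par : V -> option V) (x : V) : bool :=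
  [forall y, par y != Some x].

Definition nsub (V : finType) (par : V -> option V) (w : V -> nat) (u : V) : nat :=
  (\sum_(h | is_leaf par h && desc par u h) w h)%N.

(* Scenario: [None] = no failure, [Some F] = failure of PM F.
   Allocation: [C] = C_s (VM slots per PM, only values on leaves matter),
   [Bw u] = B_s(l_u) (bandwidth on the link from u to its parent).
   [offers ... v n] : T_v can offer n working VMs in scenario [sc]. *)
Definition offers (R : realFieldType) (V : finType) (par : V -> option V)
  (N : nat) (B : R) (C : V -> nat) (Bw : V -> R) (sc : option V)
  (v : V) (n : nat) : Prop :=
  exists w : V -> nat,
    [/\ (forall h, is_leaf par h -> desc par v h -> (w h <= C h)%N),
        (forall F, sc = Some F -> desc par v F -> w F = 0%N),
        nsub par w v = n &
        (forall u, desc par v u -> par u != None ->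
           Num.min ((nsub par w u)%:R : R) (N%:R - (nsub par w u)%:R) * B
             <= Bw u)].

(* Main.v *)
Require Import Defs.
From HB Require Import structures.
From mathcomp Require Import all_boot all_order all_algebra.
From mathcomp Require Import zify.
Set Implicit Arguments. Unset Strict Implicit. Unset Printing Implicit Defensive.
Import Order.TTheory GRing.Theory Num.Theory.

Definition anc (V : finType) (par : V -> option V) k (a : V) :=
  iter k (obind par) (Some a).

Lemma iter_none (V : finType) (par : V -> option V) k :
  iter k (obind par) None = None.
Proof. by elim: k => //= k ->. Qed.

Lemma descP (V : finType) (par : V -> option V) u h :
  reflect (exists k, anc par k h = Some u) (desc par u h).
Proof.
apply: (iffP idP).
- move/connectP => [p Hp ->].
  elim: p h Hp => [|a p IH] h /=; first by exists 0%N.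
  move/andP => [/eqP Hh Hp]; have [k Hk] := IH a Hp.
  by exists k.+1; rewrite /anc iterSr /= Hh.
- move=> [k]; elim: k h => [|k IH] h.
    by rewrite /anc /= => [[->]]; exact: connect0.
  rewrite /anc iterSr /=; case Hp: (par h) => [a|]; last by rewrite iter_none.
  move=> Hk; apply: connect_trans (connect1 _) (IH a Hk); by rewrite /= Hp.
Qed.

Lemma desc_refl (V : finType) (par : V -> option V) u : desc par u u.
Proof. exact: connect0. Qed.

Lemma desc_trans (V : finType) (par : V -> option V) u x h :
  desc par u x -> desc par x h -> desc par u h.
Proof. move=> H1 H2; exact: connect_trans H2 H1. Qed.

Lemma desc_par (V : finType) (par : V -> option V) c x :
  par c = Some x -> desc par x c.
Proof. move=> H; apply: connect1; by rewrite /= H. Qed.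

Lemma desc_total (V : finType) (par : V -> option V) u x h :
  desc par u h -> desc par x h -> desc par u x || desc par x u.
Proof.
move=> /descP [k1 H1] /descP [k2 H2].
case: (leqP k1 k2) => Hk.
- apply/orP; right; apply/descP; exists (k2 - k1)%N.
  by rewrite /anc -H1 /anc -iterD subnK.
- apply/orP; left; apply/descP; exists (k1 - k2)%N.
  by rewrite /anc -H2 /anc -iterD subnK // ltnW.
Qed.

Lemma child_of (V : finType) (par : V -> option V) x y :
  desc par x y -> y != x -> exists c, par c = Some x /\ desc par c y.
Proof.
move=> /descP [[|k] Hk] Hyx.
  by move: Hk; rewrite /anc /= => [[E]]; rewrite E eqxx in Hyx.
move: Hk; rewrite /anc iterS.
case E: (iter k (obind par) (Some y)) => [c|] //= Hc.
exists c; split => //; apply/descP; by exists k.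
Qed.

Lemma desc_step (V : finType) (par : V -> option V) u a b :
  desc par u a -> a != u -> par a = Some b -> desc par u b.
Proof.
move=> /descP [[|k] Hk] Hau Hab.
  by move: Hk; rewrite /anc /= => [[E]]; rewrite E eqxx in Hau.
apply/descP; exists k; by move: Hk; rewrite /anc iterSr /= Hab.
Qed.

Lemma depth_exists (V : finType) (par : V -> option V) :
  is_rooted_tree par ->
  exists dep : V -> nat, forall k a b, anc par k a = Some b ->
    dep a = (dep b + k)%N.
Proof.
case=> r [Hr Hreach].
have ex : forall x, exists k, iter k (obind par) (Some x) == Some r.
  by move=> x; have [k Hk] := Hreach x; exists k; apply/eqP.
exists (fun x => ex_minn (ex x)) => k a b Hab.
case: ex_minnP => da /eqP Hda minA.
case: ex_minnP => db /eqP Hdb minB.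
have h1 : (da <= db + k)%N.
  by apply: minA; rewrite iterD -/(anc par k a) Hab Hdb.
have h2 : (k <= da)%N.
  rewrite leqNgt; apply/negP => Hlt.
  move: Hab; rewrite /anc -(subnK (ltnW Hlt)) iterD Hda.
  case E: (k - da)%N => [|j]; first by move: Hlt; lia.
  by rewrite iterSr /= Hr iter_none.
have h3 : (db <= da - k)%N.
  have E : iter da (obind par) (Some a) = iter (da - k) (obind par) (Some b).
    by rewrite -{1}(subnK h2) iterD -/(anc par k a) Hab.
  by apply: minB; rewrite -E Hda.
lia.
Qed.

Lemma fill (V : finType) (P : pred V) (f : V -> nat) t :
  (t <= \sum_(h | P h) f h)%N ->
  exists g : V -> nat, [/\ forall h, (g h <= f h)%N,
     forall h, ~~ P h -> g h = 0%N & (\sum_(h | P h) g h)%N = t].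
Proof.
elim: t => [|t IH] Ht.
  by exists (fun _ => 0%N); split => //; rewrite big1.
have [g [Hg1 Hg2 Hg3]] := IH (ltnW Ht).
case: (pickP (fun h => P h && (g h < f h)%N)) => [h /andP[Ph Hlt] | Hno].
- exists (fun z => if z == h then (g h).+1 else g z); split.
  + by move=> z; case: eqP => [->|].
  + move=> z Pz; case: eqP => [Ez|_]; last exact: Hg2.
    by rewrite Ez Ph in Pz.
  + rewrite (bigD1 h Ph) /= eqxx (eq_bigr (fun z => g z)); last first.
      by move=> z /andP[_ /negbTE ->].
    by rewrite -Hg3 (bigD1 h Ph) /= addSn.
- have : (\sum_(h | P h) f h <= \sum_(h | P h) g h)%N.
    apply: leq_sum => h Ph; move: (Hno h); rewrite Ph /= => /negbT.
    by rewrite -leqNgt.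
  move: Ht; rewrite Hg3; lia.
Qed.

Lemma sum_eq_supp (V : finType) (P Q : pred V) (f : V -> nat) :
  (forall h, P h != Q h -> f h = 0%N) ->
  (\sum_(h | P h) f h = \sum_(h | Q h) f h)%N.
Proof.
move=> H; rewrite big_mkcond [RHS]big_mkcond; apply: eq_bigr => h _.
by case Ph: (P h); case Qh: (Q h) => //; rewrite H // Ph Qh.
Qed.

Lemma sum_le_sub (V : finType) (P Q : pred V) (f : V -> nat) :
  (forall h, P h -> Q h) ->
  (\sum_(h | P h) f h <= \sum_(h | Q h) f h)%N.
Proof.
move=> H; rewrite big_mkcond [X in (_ <= X)%N]big_mkcond; apply: leq_sum => h _.
by case Ph: (P h); [rewrite (H _ Ph) | case: (Q h)].
Qed.

Lemma nsub_mono (V : finType) (par : V -> option V) w c y :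
  desc par c y -> (nsub par w y <= nsub par w c)%N.
Proof.
move=> Dcy; apply: sum_le_sub => h /andP[Lh Dyh].
by rewrite Lh (desc_trans Dcy Dyh).
Qed.

Local Open Scope ring_scope.

Lemma core (R : realFieldType) (V : finType) (par : V -> option V)
  (N : nat) (B : R) (C : V -> nat) (Bw : V -> R) (sc : option V) (v : V)
  (w : V -> nat) (x : V) (K : pred V) (m : nat) :
  (forall u, 0 <= Bw u) -> 0 <= B ->
  (forall h, is_leaf par h -> desc par v h -> (w h <= C h)%N) ->
  (forall F, sc = Some F -> desc par v F -> w F = 0%N) ->
  (forall u, desc par v u -> par u != None ->
     Num.min ((nsub par w u)%:R : R) (N%:R - (nsub par w u)%:R) * B <= Bw u) ->
  desc par v x ->
  (forall h, K h -> is_leaf par h && desc par x h) ->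
  (\sum_(h | is_leaf par h && desc par x h && K h) w h)%N = m ->
  (m <= N)%N -> (N <= nsub par w x)%N ->
  (forall y, desc par x y -> y != x ->
     (forall h, is_leaf par h -> desc par y h -> K h) \/
     ((forall h, is_leaf par h -> desc par y h -> ~~ K h) /\
      (nsub par w y <= m)%N)) ->
  offers par N B C Bw sc v N.
Proof.
move=> HBw HB Hcap Hfail Hbw Dvx HK Hm HmN HNx Hd.
have Hsplit : (nsub par w x = m + \sum_(h | is_leaf par h && desc par x h && ~~ K h) w h)%N.
  by rewrite /nsub (bigID K) /= Hm.
have [g [Hg1 Hg2 Hg3]] := @fill V (fun h => is_leaf par h && desc par x h && ~~ K h) w (N - m)%N
  ltac:(move: HNx; rewrite Hsplit; lia).
pose w' h := if K h then w h else g h.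
have Hw'le : forall h, (w' h <= w h)%N by move=> h; rewrite /w'; case: (K h).
have Hw'0 : forall h, w' h != 0%N -> is_leaf par h && desc par x h.
  move=> h; rewrite /w'; case Kh: (K h); first by move=> _; exact: HK.
  apply: contraR => Hn; rewrite Hg2 //; by rewrite Kh andbT.
have HN : (\sum_(h | is_leaf par h && desc par x h) w' h)%N = N.
  rewrite (bigID K) /=.
  rewrite (eq_bigr w); last by move=> h /andP[_ Kh]; rewrite /w' Kh.
  rewrite [X in (_ + X)%N](eq_bigr g); last by move=> h /andP[_ Kh]; rewrite /w' (negbTE Kh).
  by rewrite Hm Hg3; lia.
have Hanc : forall y, desc par y x -> nsub par w' y = N.
  move=> y Dyx; rewrite /nsub -HN; apply: sum_eq_supp => h Hne.
  case: (eqVneq (w' h) 0%N) => // /Hw'0 /andP[Lh Dxh].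
  by rewrite Lh Dxh (desc_trans Dyx Dxh) in Hne.
have Hoff : forall y, ~~ desc par y x -> ~~ desc par x y -> nsub par w' y = 0%N.
  move=> y Nyx Nxy; rewrite /nsub big1 // => h /andP[Lh Dyh].
  case: (eqVneq (w' h) 0%N) => // /Hw'0 /andP[_ Dxh].
  by have := desc_total Dyh Dxh; rewrite (negbTE Nyx) (negbTE Nxy).
exists w'; split.
- move=> h Lh Dvh; exact: leq_trans (Hw'le h) (Hcap h Lh Dvh).
- move=> F HF DF; have := Hw'le F; rewrite Hfail //; lia.
- exact: Hanc.
- move=> y Dvy Hpy.
  case: (boolP (desc par y x)) => Dyx.
    by rewrite Hanc // subrr min_r ?ler0n // mul0r.
  case: (boolP (desc par x y)) => Dxy; last first.
    by rewrite Hoff // subr0 min_l ?ler0n // mul0r.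
  have Hyx : y != x by apply: contraNneq Dyx => ->; exact: desc_refl.
  case: (Hd y Dxy Hyx) => [Hin | [Hout Hle]].
    have -> : nsub par w' y = nsub par w y.
      by apply: eq_bigr => h /andP[Lh Dyh]; rewrite /w' (Hin h Lh Dyh).
    exact: Hbw.
  have H1 : (nsub par w' y <= N - m)%N.
    rewrite -Hg3 /nsub (eq_bigr g); last first.
      by move=> h /andP[Lh Dyh]; rewrite /w' (negbTE (Hout h Lh Dyh)).
    apply: sum_le_sub => h /andP[Lh Dyh].
    by rewrite Lh (desc_trans Dxy Dyh) (Hout h Lh Dyh).
  have H2 : (nsub par w' y <= nsub par w y)%N by apply: leq_sum => h _.
  apply: le_trans (Hbw y Dvy Hpy); apply: ler_wpM2r => //.
  rewrite le_min; apply/andP; split; rewrite ge_min; apply/orP; left.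
    by rewrite ler_nat.
  rewrite lerBrDr -natrD ler_nat; lia.
Qed.

Theorem lemma2 (R : realFieldType) (V : finType) (par : V -> option V)
  (N : nat) (B : R) (C : V -> nat) (Bw : V -> R) (sc : option V) (v : V)
  (n : nat) :
  is_rooted_tree par ->
  (0 < N)%N -> 0 <= B ->
  (forall u, 0 <= Bw u) ->
  (forall F, sc = Some F -> is_leaf par F) ->
  offers par N B C Bw sc v n ->
  (N < n)%N ->
  offers par N B C Bw sc v N.
Proof.
move=> Htree HN0 HB HBw Hsc [w [Hcap Hfail Hsum Hbw]] HNn.
have [dep Hdep] := depth_exists Htree.
have Hchild : forall c x, par c = Some x -> dep c = (dep x).+1.
  move=> c x H; rewrite (Hdep 1%N c x) ?addn1 //.
have Hnocyc : forall c x, par c = Some x -> desc par c x -> False.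
  move=> c x H /descP [k Hk]; have := Hdep k x c Hk; rewrite (Hchild c x H); lia.
pose P x := desc par v x && (N <= nsub par w x)%N.
have Pv : P v by rewrite /P desc_refl Hsum ltnW.
case: (@arg_maxnP V v P dep Pv) => x /andP[Dvx HNx] Hmax.
have Hsmall : forall c, par c = Some x -> (nsub par w c < N)%N.
  move=> c Hc; rewrite ltnNge; apply/negP => HcN.
  have Pc : P c by rewrite /P HcN (desc_trans Dvx (desc_par Hc)).
  have := Hmax c Pc; rewrite (Hchild c x Hc); lia.
case: (pickP (fun c => par c == Some x)) => [c0 Hc0 | Hnone].
- case: (@arg_maxnP V c0 (fun c => par c == Some x) (fun c => nsub par w c) Hc0) => c1 /eqP Hc1 Hc1max.
  apply: (@core R V par N B C Bw sc v w x
            (fun h => is_leaf par h && desc par c1 h) (nsub par w c1)) => //.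
  + move=> h /andP[Lh Dh]; by rewrite Lh (desc_trans (desc_par Hc1) Dh).
  + rewrite /nsub; apply: eq_bigl => h.
    case Lh: (is_leaf par h) => //=; case Dh: (desc par c1 h) => //=.
      by rewrite (desc_trans (desc_par Hc1) Dh).
    by rewrite andbF.
  + exact: ltnW (Hsmall c1 Hc1).
  + move=> y Dxy Hyx; have [c [Hc Dcy]] := child_of Dxy Hyx.
    case: (boolP (desc par c1 y)) => Dc1y.
      left => h Lh Dyh; by rewrite Lh (desc_trans Dc1y Dyh).
    right; split.
      move=> h Lh Dyh; apply/negP => /andP[_ Dc1h].
      case/orP: (desc_total Dc1h Dyh) => [|Dyc1]; first by rewrite (negbTE Dc1y).
      have Dcc1 := desc_trans Dcy Dyc1.
      case: (eqVneq c1 c) => [E|Hne]; first by rewrite E Dcy in Dc1y.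
      exact: (Hnocyc c x Hc (desc_step Dcc1 Hne Hc1)).
    apply: leq_trans (nsub_mono w Dcy) _.
    apply: Hc1max; by rewrite Hc.
- apply: (@core R V par N B C Bw sc v w x (fun _ => false) 0%N) => //.
  + by rewrite big_pred0 // => h; rewrite andbF.
  + move=> y Dxy Hyx; have [c [Hc _]] := child_of Dxy Hyx.
    by have := Hnone c; rewrite Hc eqxx.
Qed.
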